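(* Let $p\ge1$ and $q\ge2$ be integers and $m=p+q-1$. For integers $r\ge1$ and $s$ put $F_r(s)=\binom{2r-s-1}{r-1}$. Then for every $j\in[1,m]$, \[ \binom{2m-j-1}{m-1}=A(j)+B(j)+C(j), \] where \[ A(j)=\sum_{\substack{s\in[1,p],\ t\in[1,q-1]\\ s+t=j}}F_p(s)F_{q-1}(t),\qquad B(j)=\sum_{s=j}^{p}\sum_{t=1}^{q-1}F_p(s)F_{q-1}(t)\binom{s+t-j-1}{s-j}, \] \[ C(j)=\sum_{s=1}^{p}\sum_{t=j}^{q-1}F_p(s)F_{q-1}(t)\binom{s+t-j-1}{s-1} \] (empty sums are $0$).
   Context: $[1,n]=\{1,\dots,n\}$; binomial coefficients are the usual ones for non-negative arguments. *)

(* Defs.v *)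
From mathcomp Require Import all_boot.
(* F_r(s) = binom(2r - s - 1, r - 1); only used with 1 <= s <= r, so the
   truncated nat subtraction agrees with integer subtraction. *)
Definition F (r s : nat) : nat := 'C(2 * r - s - 1, r - 1).

(* Main.v *)
Require Import Defs.
From mathcomp Require Import all_boot zify.

Lemma recr m n (F : nat -> nat) : m <= n ->
  \sum_(m <= i < n.+1) F i = \sum_(m <= i < n) F i + F n.
Proof. exact: big_nat_recr. Qed.

Lemma W x y c :
  \sum_(0 <= k < c.+1) 'C(x + k, x) * 'C(y + (c - k), y) = 'C((x + y + 1) + c, x + y + 1).
Proof.
elim: c y => [|c IH] y.
  by rewrite big_nat1 !addn0 !binn.
elim: y => [|y IHy].
  under eq_big_nat => k _ do rewrite bin0 muln1.
  have := IH 0; under eq_big_nat => k _ do rewrite bin0 muln1.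
  move=> H; rewrite recr // H.
  have -> : x + 0 + 1 + c.+1 = (x + 0 + 1 + c).+1 by lia.
  have -> : x + 0 + 1 = x.+1 by lia.
  rewrite binS; congr (_ + _); congr 'C(_, _); lia.
rewrite recr // subnn addn0 binn muln1.
rewrite (@eq_big_nat _ _ _ 0 c.+1 _ (fun k => 'C(x + k, x) * 'C(y.+1 + (c - k), y.+1)
   + 'C(x + k, x) * 'C(y + (c.+1 - k), y))); last first.
  move=> k /andP[_ hk]; rewrite -mulnDr; congr (_ * _).
  have -> : y.+1 + (c.+1 - k) = (y.+1 + (c - k)).+1 by lia.
  rewrite binS; congr (_ + _); congr 'C(_, _); lia.
rewrite big_split /= IH -addnA.
have := IHy; rewrite recr // subnn addn0 binn muln1 => ->.
have -> : x + y.+1 + 1 + c.+1 = (x + y + 1 + c.+1).+1 by lia.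
have -> : x + y.+1 + 1 = (x + y + 1).+1 by lia.
rewrite binS; congr (_ + _); congr 'C(_, _); lia.
Qed.

Lemma binSym n k l : k + l = n -> 'C(n, k) = 'C(n, l).
Proof. by move<-; rewrite -[RHS]bin_sub ?leq_addl // addnK. Qed.

Lemma binSym' n n' k l : n = n' -> k + l = n -> 'C(n, k) = 'C(n', l).
Proof. by move<-; apply: binSym. Qed.

Lemma LB b s j : 1 <= b -> j <= s ->
  \sum_(1 <= t < b.+1) F b t * 'C(s + t - j - 1, s - j) = 'C(2 * b + s - j - 1, b - 1).
Proof.
case: b => // b _ hj; rewrite big_add1 /=.
rewrite (@eq_big_nat _ _ _ 0 b.+1 _ (fun i => 'C(s - j + i, s - j) * 'C(b + (b - i), b))).
  rewrite W; apply: binSym'; lia.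
move=> i /andP[_ hi]; rewrite /F mulnC; congr (_ * _); congr 'C(_, _); lia.
Qed.

Lemma LC a t j : 1 <= a -> j <= t ->
  \sum_(1 <= s < a.+1) F a s * 'C(s + t - j - 1, s - 1) = 'C(2 * a + t - j - 1, a - 1).
Proof.
case: a => // a _ hj; rewrite big_add1 /=.
rewrite (@eq_big_nat _ _ _ 0 a.+1 _ (fun i => 'C(t - j + i, t - j) * 'C(a + (a - i), a))).
  rewrite W; apply: binSym'; lia.
move=> i /andP[_ hi]; rewrite /F mulnC; congr (_ * _).
  apply: binSym'; lia.
congr 'C(_, _); lia.
Qed.

Lemma LA a b s j :
  \sum_(1 <= t < b.+1) (if s + t == j then F a s * F b t else 0) =
  if (s < j) && (j - s <= b) then F a s * F b (j - s) else 0.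
Proof.
have [h|h] := ltnP s j.
  rewrite -big_mkcond /= (eq_bigl (fun t => t == j - s)); last first.
    by move=> t; apply/idP/idP => /eqP H; apply/eqP; lia.
  by rewrite big_nat1_eq subn_gt0 h /= ltnS.
rewrite /= big_nat big1 // => t /andP[ht1 ht2].
rewrite ifF //; apply/negbTE/eqP; lia.
Qed.

Lemma EXT m j n (G : nat -> nat) : m <= j ->
  \sum_(m <= s < n) (if j <= s then G s else 0) = \sum_(j <= s < n) G s.
Proof.
move=> hm; have [hn|hn] := leqP j n.
  rewrite (big_cat_nat hm hn) /= big_nat big1 ?add0n; last first.
    by move=> s /andP[_ hs]; rewrite leqNgt hs.
  by apply: eq_big_nat => s /andP[hs _]; rewrite hs.
rewrite [RHS]big_geq ?(ltnW hn) // big_nat big1 // => s /andP[_ hs].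
by rewrite ifF //; apply/negbTE; rewrite -ltnNge; apply: ltn_trans hn.
Qed.

Lemma shiftS j n (G : nat -> nat) :
  \sum_(j <= t < n) G t = \sum_(0 <= i < n - j) G (i + j).
Proof. by rewrite -{1}[j]add0n big_addn. Qed.

Lemma catn m n p (G : nat -> nat) : m <= n -> n <= p ->
  \sum_(m <= i < p) G i = \sum_(m <= i < n) G i + \sum_(n <= i < p) G i.
Proof. exact: big_cat_nat. Qed.

Lemma TOT a b j : 1 <= a -> 1 <= b -> 1 <= j <= a + b ->
  'C(2 * (a + b) - j - 1, a + b - 1) =
  \sum_(1 <= s < a.+1) F a s * (if j <= s + b then 'C(2 * b + s - j - 1, b - 1) else 0)
  + \sum_(j <= t < b.+1) F b t * 'C(2 * a + t - j - 1, a - 1).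
Proof.
move=> ha hb /andP[hj1 hj2].
have HW := W (a - 1) (b - 1) (a + b - j).
have -> : 'C(2 * (a + b) - j - 1, a + b - 1) =
   'C(a - 1 + (b - 1) + 1 + (a + b - j), a - 1 + (b - 1) + 1) by congr 'C(_, _); lia.
rewrite -HW.
set c := a + b - j.
have P1 : \sum_(1 <= s < a.+1) F a s * (if j <= s + b then 'C(2 * b + s - j - 1, b - 1) else 0)
  = \sum_(0 <= k < a) (if k <= c then 'C(a - 1 + k, a - 1) * 'C(b - 1 + (c - k), b - 1) else 0).
  rewrite big_nat_rev big_add1 /=; apply: eq_big_nat => i /andP[_ hi].
  have [hk|hk] := leqP i c.
    rewrite ifT; last lia.
    rewrite /F; congr (_ * _); congr 'C(_, _); lia.
  rewrite ifF; last by apply/negbTE; rewrite -ltnNge; lia.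
  by rewrite muln0.
have P2 : \sum_(j <= t < b.+1) F b t * 'C(2 * a + t - j - 1, a - 1)
  = \sum_(a <= k < c.+1) 'C(a - 1 + k, a - 1) * 'C(b - 1 + (c - k), b - 1).
  rewrite shiftS [RHS]shiftS; have -> : c.+1 - a = b.+1 - j by lia.
  apply: eq_big_nat => i /andP[_ hi]; rewrite mulnC /F; congr (_ * _); congr 'C(_, _); lia.
rewrite P1 P2.
case: (leqP a c.+1) => hac.
  rewrite (@catn 0 a c.+1 _ (leq0n a) hac); congr (_ + _).
  by apply: eq_big_nat => k /andP[_ hk]; rewrite ifT //; lia.
rewrite [X in _ = _ + X]big_geq ?(ltnW hac) // addn0 (@catn 0 c.+1 a _ (leq0n c.+1) (ltnW hac)).
have Z : \sum_(c.+1 <= k < a)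
    (if k <= c then 'C(a - 1 + k, a - 1) * 'C(b - 1 + (c - k), b - 1) else 0) = 0.
  rewrite big_nat big1 // => k /andP[hk _].
  by rewrite ifF //; apply/negbTE; rewrite -ltnNge.
rewrite Z addn0.
by apply: eq_big_nat => k /andP[_ hk]; rewrite ifT.
Qed.

Theorem lemma5 (p q j : nat) :
  1 <= p -> 2 <= q -> 1 <= j <= p + q - 1 ->
  let m := p + q - 1 in
  'C(2 * m - j - 1, m - 1) =
    \sum_(1 <= s < p.+1) \sum_(1 <= t < q) (if s + t == j then F p s * F (q - 1) t else 0)
  + \sum_(j <= s < p.+1) \sum_(1 <= t < q) F p s * F (q - 1) t * 'C(s + t - j - 1, s - j)
  + \sum_(1 <= s < p.+1) \sum_(j <= t < q) F p s * F (q - 1) t * 'C(s + t - j - 1, s - 1).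
Proof.
move=> hp hq hj m.
have [b Hq hb] : exists2 b, q = b.+1 & 1 <= b by exists q.-1; lia.
subst q; rewrite /m.
have -> : b.+1 - 1 = b by lia.
have -> : p + b.+1 - 1 = p + b by lia.
have hj' : 1 <= j <= p + b by lia.
move/andP: (hj') => [hj1 hj2].
have AS : \sum_(1 <= s < p.+1) \sum_(1 <= t < b.+1) (if s + t == j then F p s * F b t else 0)
  = \sum_(1 <= s < p.+1) (if (s < j) && (j - s <= b) then F p s * F b (j - s) else 0).
  by apply: eq_bigr => s _; apply: LA.
have BS : \sum_(j <= s < p.+1) \sum_(1 <= t < b.+1) F p s * F b t * 'C(s + t - j - 1, s - j)
  = \sum_(1 <= s < p.+1) (if j <= s then F p s * 'C(2 * b + s - j - 1, b - 1) else 0).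
  rewrite EXT //; apply: eq_big_nat => s /andP[hs _].
  rewrite -(@LB b s j hb hs) big_distrr; apply: eq_bigr => t _; exact: (esym (mulnA _ _ _)).
have CS : \sum_(1 <= s < p.+1) \sum_(j <= t < b.+1) F p s * F b t * 'C(s + t - j - 1, s - 1)
  = \sum_(j <= t < b.+1) F b t * 'C(2 * p + t - j - 1, p - 1).
  rewrite exchange_big_nat; apply: eq_big_nat => t /andP[ht _].
  rewrite -(@LC p t j hp ht) big_distrr; apply: eq_bigr => s _; rewrite -mulnA; exact: mulnCA.
rewrite AS BS CS (@TOT p b j hp hb hj'); congr (_ + _).
rewrite -big_split /=; apply: eq_big_nat => s /andP[hs1 hs2].
have [h|h] := leqP j s.
  by rewrite ifT; last lia.
rewrite addn0 /=.
case: (leqP (j - s) b) => hb2.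
  rewrite ifT; last lia.
  by rewrite /F; congr (_ * _); congr 'C(_, _); lia.
by rewrite ifF ?muln0 //; apply/negbTE; rewrite -ltnNge; lia.
Qed.
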